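(* Let $(X,Y)\sim P_{X,Y}$ be random variables in $\mathcal{X}\times\mathcal{Y}$, where $|\mathcal{X}|=2$ and $\mathcal{Y}$ is finite. For any positive integer $L$, the greedy-merge algorithm finds a quantizer $f:\mathcal{Y}\to\{1,\dots,L\}$ such that \[ I(X;Y)-I(X;f(Y))\leq\frac{64}{L^2}. \]
   Context: Logarithms are natural. The greedy-merge algorithm: repeatedly merge into a single new symbol the two output symbols $i\neq j$ whose merging (applying the map sending $i,j$ to a new common symbol and fixing all others) decreases the mutual information with $X$ the least, until at most $L$ symbols remain; the quantizer $f$ is the composition of all merges. *)

(* Defs.v *)
From HB Require Import structures.
From mathcomp Require Import all_boot all_order all_algebra.
From mathcomp Require Import reals exp.
Set Implicit Arguments. Unset Strict Implicit. Unset Printing Implicit Defensive.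
Import Order.TTheory GRing.Theory Num.Theory.
Local Open Scope ring_scope.

Section InfoDefs.
Variables (R : realType) (X Y : finType).

Definition is_joint_dist (P : X -> Y -> R) : Prop :=
  (forall x y, 0 <= P x y) /\ \sum_(x : X) \sum_(y : Y) P x y = 1.

Definition labels (T : eqType) (g : Y -> T) : seq T :=
  undup [seq g y | y <- enum Y].

Definition pX (P : X -> Y -> R) (x : X) : R := \sum_(y : Y) P x y.

Definition pXg (T : eqType) (P : X -> Y -> R) (g : Y -> T) (x : X) (z : T) : R :=
  \sum_(y : Y | g y == z) P x y.

Definition pg (T : eqType) (P : X -> Y -> R) (g : Y -> T) (z : T) : R :=
  \sum_(x : X) pXg P g x z.

(* Mutual information I(X; g(Y)) in nats, with the convention 0 log 0 = 0. *)
Definition MI (T : eqType) (P : X -> Y -> R) (g : Y -> T) : R :=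
  \sum_(z <- labels g) \sum_(x : X)
     (if 0 < pXg P g x z
      then pXg P g x z * ln (pXg P g x z / (pX P x * pg P g z))
      else 0).

Definition merge (g : Y -> nat) (i j k : nat) : Y -> nat :=
  fun y => if (g y == i) || (g y == j) then k else g y.

Definition greedy_step (P : X -> Y -> R) (g g' : Y -> nat) : Prop :=
  exists i j k,
    [/\ i \in labels g, j \in labels g, i != j & k \notin labels g] /\
        (forall i' j' k', i' \in labels g -> j' \in labels g -> i' != j' ->
            k' \notin labels g ->
            MI P g - MI P (merge g i j k) <= MI P g - MI P (merge g i' j' k')) /\
        (forall y, g' y = merge g i j k y).

Fixpoint greedy_run (P : X -> Y -> R) (L : nat) (g : Y -> nat)
    (s : seq (Y -> nat)) : Prop :=
  match s with
  | [::] => (size (labels g) <= L)%N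
  | g' :: s' => (L < size (labels g))%N /\ greedy_step P g g' /\ greedy_run P L g' s'
  end.

End InfoDefs.

(* Main.v *)
Require Import Defs.
From HB Require Import structures.
From mathcomp Require Import all_boot all_order all_algebra.
From mathcomp Require Import reals exp.
From mathcomp Require Import ring lra zify.
Import Order.TTheory GRing.Theory Num.Theory.
Local Open Scope ring_scope.

Section Alg.
Variable R : realType.

Lemma XT {c1 s1 c2 s2 : R} : 0 <= c1 -> 0 <= s1 -> 0 <= c2 -> 0 <= s2 ->
  c1^+2 + s1^+2 = 1 -> c2^+2 + s2^+2 = 1 ->
  (c1*s2 - s1*c2)^+2 <= ((s1-c1)-(s2-c2))^+2.
Proof.
move=> hc1 hs1 hc2 hs2 e1 e2.
have c1le : c1 <= 1 by nra.
have s1le : s1 <= 1 by nra.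
have c2le : c2 <= 1 by nra.
have s2le : s2 <= 1 by nra.
have [h|h] := leP s1 s2.
- have hc : c2 <= c1 by nra.
  have X0 : 0 <= c1*s2 - s1*c2 by nra.
  have X1 : c1*s2 - s1*c2 <= (s2 - s1) + (c1 - c2) by nra.
  nra.
- have hc : c1 <= c2 by nra.
  have X0 : c1*s2 - s1*c2 <= 0 by nra.
  have X1 : -((s1 - s2) + (c2 - c1)) <= c1*s2 - s1*c2 by nra.
  nra.
Qed.

Lemma cs_ineq (n1 n2 c1 s1 c2 s2 : R) : 0 < n1 -> 0 < n2 ->
  0 <= c1 -> 0 <= s1 -> 0 <= c2 -> 0 <= s2 ->
  c1^+2 + s1^+2 = 1 -> c2^+2 + s2^+2 = 1 ->
  (n1*n2*(c1^+2*s2^+2 - c2^+2*s1^+2))^+2 <=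
  2*n1*n2*((n1*c1^+2+n2*c2^+2)*(n1*s1^+2+n2*s2^+2))*((s1-c1)-(s2-c2))^+2.
Proof.
move=> hn1 hn2 hc1 hs1 hc2 hs2 e1 e2.
have hX := XT (c1:=c1) (s1:=s1) (c2:=c2) (s2:=s2) hc1 hs1 hc2 hs2 e1 e2.
set X := c1*s2 - s1*c2. set T := (s1-c1)-(s2-c2).
set Z := c1^+2*s2^+2 + s1^+2*c2^+2.
have eD : c1^+2*s2^+2 - c2^+2*s1^+2 = X * (c1*s2+s1*c2) by rewrite /X; ring.
have hY : (c1*s2+s1*c2)^+2 <= 2 * Z by rewrite /Z; nra.
have hab : n1*n2*Z <= (n1*c1^+2+n2*c2^+2)*(n1*s1^+2+n2*s2^+2).
  rewrite /Z; have := mulr_gt0 hn1 hn2; nra.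
have hZ : 0 <= Z by rewrite /Z; nra.
have hnn : 0 < n1 * n2 by apply: mulr_gt0.
rewrite eD.
have -> : (n1 * n2 * (X * (c1 * s2 + s1 * c2))) ^+ 2 =
   (n1*n2)^+2 * X^+2 * (c1 * s2 + s1 * c2)^+2 by ring.
have h1 : (n1*n2)^+2 * X^+2 * (c1 * s2 + s1 * c2)^+2 <= (n1*n2)^+2 * T^+2 * (2*Z).
  apply: ler_pM => //.
  - by apply: mulr_ge0; apply: sqr_ge0.
  - by apply: sqr_ge0.
  - by apply: ler_wpM2l => //; apply: sqr_ge0.
apply: (le_trans h1).
have -> : (n1*n2)^+2 * T^+2 * (2*Z) = 2 * (n1*n2) * (n1*n2*Z) * T^+2 by ring.
have -> : 2 * n1 * n2 * ((n1 * c1 ^+ 2 + n2 * c2 ^+ 2) * (n1 * s1 ^+ 2 + n2 * s2 ^+ 2)) * T ^+ 2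
  = 2 * (n1*n2) * ((n1 * c1 ^+ 2 + n2 * c2 ^+ 2) * (n1 * s1 ^+ 2 + n2 * s2 ^+ 2)) * T ^+ 2 by ring.
apply: ler_wpM2r; first by apply: sqr_ge0.
apply: ler_wpM2l => //; lra.
Qed.


Definition psi (u p q : R) := if 0 < u then u * ln (u / (p * q)) else 0.

Lemma ln_le_sub1 (x : R) : 0 < x -> ln x <= x - 1.
Proof.
move=> hx; have := @le_ln1Dx R (x - 1).
have -> : 1 + (x - 1) = x by ring.
apply; lra.
Qed.

Lemma term_le (u n a N p : R) : 0 <= u -> u <= n -> u <= a -> 0 < a -> a <= p ->
  n <= N -> psi u p n - u * ln (a / (p * N)) <= u^+2 * N / (n * a) - u.
Proof.
move=> hu hun hua ha hap hnN; rewrite /psi.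
have [u0|] := ltP 0 u; last first.
  move=> u0; have -> : u = 0 by apply/eqP; rewrite eq_le u0.
  by rewrite mul0r expr0n /= !mul0r subr0 lexx.
have hn : 0 < n by lra.
have hp : 0 < p by lra.
have hN : 0 < N by lra.
have pn : 0 < p * n by apply: mulr_gt0.
have pN : 0 < p * N by apply: mulr_gt0.
have q1 : 0 < u / (p * n) by apply: divr_gt0.
have q2 : 0 < a / (p * N) by apply: divr_gt0.
rewrite -mulrBr -(ln_div (x:=u/(p*n)) (y:=a/(p*N))) ?posrE //.
have -> : u / (p * n) / (a / (p * N)) = u * N / (n * a).
  by field; do ![apply/andP; split] ; apply/eqP; lra.
have hx : 0 < u * N / (n * a) by apply: divr_gt0; apply: mulr_gt0.
have hl := @ln_le_sub1 _ hx.
have := ler_wpM2l (ltW u0) hl.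
have -> : u * (u * N / (n * a) - 1) = u ^+ 2 * N / (n * a) - u by field; apply/andP; split; apply/eqP; lra.
by [].
Qed.

Lemma psi0 (p q : R) : psi 0 p q = 0.
Proof. by rewrite /psi ltxx. Qed.

Lemma part_le (a1 a2 n1 n2 p : R) : 0 <= a1 -> 0 <= a2 -> a1 <= n1 -> a2 <= n2 ->
  a1 + a2 <= p ->
  psi a1 p n1 + psi a2 p n2 - psi (a1+a2) p (n1+n2) <=
  (a1^+2*(n1+n2)/(n1*(a1+a2)) - a1) + (a2^+2*(n1+n2)/(n2*(a1+a2)) - a2).
Proof.
move=> h1 h2 h1n h2n hp.
have [a0|apos] := leP (a1 + a2) 0.
  have e1 : a1 = 0 by lra.
  have e2 : a2 = 0 by lra.
  by rewrite e1 e2 addr0 !psi0 !expr2 ?(mul0r, mulr0, addr0, add0r, subr0, subrr, invr0, oppr0).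
have -> : psi (a1 + a2) p (n1 + n2) = a1 * ln ((a1+a2) / (p * (n1+n2))) +
   a2 * ln ((a1+a2) / (p * (n1+n2))) by rewrite /psi apos mulrDl.
have t1 := @term_le a1 n1 (a1+a2) (n1+n2) p h1 h1n ltac:(lra) apos hp ltac:(lra).
have t2 := @term_le a2 n2 (a1+a2) (n1+n2) p h2 h2n ltac:(lra) apos hp ltac:(lra).
lra.
Qed.

Lemma chi_id (a1 a2 n1 n2 : R) : 0 <= a1 -> 0 <= a2 -> 0 < n1 -> 0 < n2 ->
  (a1^+2*(n1+n2)/(n1*(a1+a2)) - a1) + (a2^+2*(n1+n2)/(n2*(a1+a2)) - a2) =
  (a1*n2 - a2*n1)^+2 / (n1*n2*(a1+a2)).
Proof.
move=> h1 h2 hn1 hn2.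
have [a0|apos] := leP (a1 + a2) 0.
  have e1 : a1 = 0 by lra.
  have e2 : a2 = 0 by lra.
  by rewrite e1 e2 !expr2 ?(mul0r, mulr0, addr0, add0r, subr0, subrr, invr0, oppr0).
by field; do ![apply/andP; split]; apply/eqP; lra.
Qed.

Definition tt (a b : R) := Num.sqrt (b/(a+b)) - Num.sqrt (a/(a+b)).

Lemma key (a1 b1 a2 b2 p0 p1 : R) : 0 <= a1 -> 0 <= b1 -> 0 <= a2 -> 0 <= b2 ->
  a1 + a2 <= p0 -> b1 + b2 <= p1 ->
  psi a1 p0 (a1+b1) + psi b1 p1 (a1+b1) + psi a2 p0 (a2+b2) + psi b2 p1 (a2+b2)
  - psi (a1+a2) p0 (a1+b1+(a2+b2)) - psi (b1+b2) p1 (a1+b1+(a2+b2))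
  <= 2*(a1+b1+(a2+b2))*(tt a1 b1 - tt a2 b2)^+2.
Proof.
move=> ha1 hb1 ha2 hb2 hp0 hp1.
have rhs0 : 0 <= 2*(a1+b1+(a2+b2))*(tt a1 b1 - tt a2 b2)^+2.
  by apply: mulr_ge0; [lra|apply: sqr_ge0].
have [n10|n1pos] := leP (a1 + b1) 0.
  have e1 : a1 = 0 by lra.
  have e2 : b1 = 0 by lra.
  subst a1 b1; rewrite !add0r !psi0 !add0r; lra.
have [n20|n2pos] := leP (a2 + b2) 0.
  have e1 : a2 = 0 by lra.
  have e2 : b2 = 0 by lra.
  subst a2 b2; rewrite !addr0 !psi0 !addr0; lra.
have pa := @part_le a1 a2 (a1+b1) (a2+b2) p0 ha1 ha2 ltac:(lra) ltac:(lra) hp0.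
have pb := @part_le b1 b2 (a1+b1) (a2+b2) p1 hb1 hb2 ltac:(lra) ltac:(lra) hp1.
rewrite chi_id // in pa; rewrite chi_id // in pb.
move: n1pos n2pos pa pb; move En1 : (a1 + b1) => n1; move En2 : (a2 + b2) => n2.
move=> n1pos n2pos pa pb.
have eD1 : a1 * n2 - a2 * n1 = a1*b2 - a2*b1 by rewrite -En1 -En2; ring.
have eD2 : b1 * n2 - b2 * n1 = - (a1*b2 - a2*b1) by rewrite -En1 -En2; ring.
rewrite eD1 in pa; rewrite eD2 sqrrN in pb.
set D := a1*b2 - a2*b1 in pa pb.
suff : D ^+ 2 / (n1 * n2 * (a1 + a2)) + D ^+ 2 / (n1 * n2 * (b1 + b2)) <=
  2 * (n1 + n2) * (tt a1 b1 - tt a2 b2) ^+ 2 by lra.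
have [a0|apos] := leP (a1 + a2) 0.
  have e1 : a1 = 0 by lra.
  have e2 : a2 = 0 by lra.
  subst a1 a2; rewrite /D !mul0r subrr !expr2 ?(mul0r, mulr0, addr0, add0r, subr0, subrr, invr0, oppr0) -expr2; apply: mulr_ge0; [lra|apply: sqr_ge0].
have [b0|bpos] := leP (b1 + b2) 0.
  have e1 : b1 = 0 by lra.
  have e2 : b2 = 0 by lra.
  subst b1 b2; rewrite /D !mulr0 subrr !expr2 ?(mul0r, mulr0, addr0, add0r, subr0, subrr, invr0, oppr0) -expr2; apply: mulr_ge0; [lra|apply: sqr_ge0].
have -> : D ^+ 2 / (n1 * n2 * (a1 + a2)) + D ^+ 2 / (n1 * n2 * (b1 + b2)) =
   D^+2 * (n1+n2) / (n1*n2*((a1+a2)*(b1+b2))).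
  by rewrite -En1 -En2; field; do ![apply/andP; split]; apply/eqP; lra.
have den : 0 < n1*n2*((a1+a2)*(b1+b2)) by do !apply: mulr_gt0.
rewrite ler_pdivrMr //.
have -> : 2 * (n1 + n2) * (tt a1 b1 - tt a2 b2) ^+ 2 * (n1 * n2 * ((a1 + a2) * (b1 + b2)))
  = (n1+n2) * (2*n1*n2*((a1 + a2) * (b1 + b2))*(tt a1 b1 - tt a2 b2) ^+ 2) by ring.
rewrite [_ * (n1+n2)]mulrC; apply: ler_wpM2l; first lra.
rewrite /tt En1 En2.
set c1 := Num.sqrt (a1 / n1); set s1 := Num.sqrt (b1 / n1).
set c2 := Num.sqrt (a2 / n2); set s2 := Num.sqrt (b2 / n2).
have ec1 : a1 = n1 * c1^+2 by rewrite /c1 sqr_sqrtr ?divr_ge0 //; [field; apply/eqP; lra| lra].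
have es1 : b1 = n1 * s1^+2 by rewrite /s1 sqr_sqrtr ?divr_ge0 //; [field; apply/eqP; lra| lra].
have ec2 : a2 = n2 * c2^+2 by rewrite /c2 sqr_sqrtr ?divr_ge0 //; [field; apply/eqP; lra| lra].
have es2 : b2 = n2 * s2^+2 by rewrite /s2 sqr_sqrtr ?divr_ge0 //; [field; apply/eqP; lra| lra].
have u1 : c1^+2 + s1^+2 = 1.
  rewrite /c1 /s1 !sqr_sqrtr ?divr_ge0 //; try lra.
  rewrite -mulrDl ?En1 ?En2 divff //; apply/eqP; lra.
have u2 : c2^+2 + s2^+2 = 1.
  rewrite /c2 /s2 !sqr_sqrtr ?divr_ge0 //; try lra.
  rewrite -mulrDl ?En1 ?En2 divff //; apply/eqP; lra.
have := @cs_ineq n1 n2 c1 s1 c2 s2 n1pos n2pos (sqrtr_ge0 _) (sqrtr_ge0 _)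
   (sqrtr_ge0 _) (sqrtr_ge0 _) u1 u2.
have -> : D = n1 * n2 * (c1 ^+ 2 * s2 ^+ 2 - c2 ^+ 2 * s1 ^+ 2).
  by rewrite /D {1}ec1 {1}es2 {1}ec2 {1}es1; ring.
have -> : (a1 + a2) * (b1 + b2) = (n1 * c1 ^+ 2 + n2 * c2 ^+ 2) * (n1 * s1 ^+ 2 + n2 * s2 ^+ 2).
  by rewrite {1}ec1 {1}es2 {1}ec2 {1}es1.
by [].
Qed.

Lemma tt_bound (a b : R) : 0 <= a -> 0 <= b -> -1 <= tt a b <= 1.
Proof.
move=> ha hb.
have h01 : forall u, 0 <= u -> u <= a + b -> Num.sqrt (u / (a+b)) <= 1.
  move=> u hu hub.
  have [ab0|abp] := leP (a+b) 0.
    have -> : a + b = 0 by lra.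
    by rewrite invr0 mulr0 sqrtr0 ler01.
  have h1 : u / (a+b) <= 1 by rewrite ler_pdivrMr // mul1r.
  have h0 : 0 <= u / (a+b) by apply: divr_ge0 => //; lra.
  have := sqr_sqrtr h0; have := sqrtr_ge0 (u / (a+b)); nra.
have := h01 a ha ltac:(lra); have := h01 b hb ltac:(lra).
have := sqrtr_ge0 (a / (a+b)); have := sqrtr_ge0 (b / (a+b)).
rewrite /tt; move=> *; apply/andP; split; lra.
Qed.

Lemma pair_bound (m w d : R) : 0 < m -> 0 <= w -> 0 <= d ->
  (m/2)*w + m*d <= 3 -> w * d^+2 <= 8 / m^+3.
Proof.
move=> hm hw hd h.
set x := (m/2)*w; set y := (m/2)*d.
have hx : 0 <= x by rewrite /x; apply: mulr_ge0 => //; lra.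
have hy : 0 <= y by rewrite /y; apply: mulr_ge0 => //; lra.
have hxy : x + 2 * y <= 3 by rewrite /x /y; lra.
have key : x * y^+2 <= 1.
  have hx3 : x <= 3 - 2*y by lra.
  have : x * y^+2 <= (3 - 2*y) * y^+2 by apply: ler_wpM2r => //; apply: sqr_ge0.
  have : 0 <= (y - 1)^+2 * (2*y+1) by apply: mulr_ge0; [apply: sqr_ge0| lra].
  move=> *; nra.
have -> : w * d^+2 = (x * y^+2) * (8 / m^+3).
  by rewrite /x /y; field; apply/eqP; lra.
rewrite -[X in _ <= X]mul1r; apply: ler_wpM2r => //.
apply: divr_ge0; [lra| apply: exprn_ge0; lra].
Qed.

End Alg.

Arguments psi {R}.
Arguments tt {R}.

Section Pigeon.
Variables (R : realType) (T : eqType) (t n : T -> R) (m : R).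

Definition f2 (p q : T) := (m/2)*(n p + n q) + m*(t q - t p).
Fixpoint ps (z0 : T) (r : seq T) : R :=
  match r with [::] => 0 | z1 :: r' => f2 z0 z1 + ps z1 r' end.

Lemma ps_eq z0 r : ps z0 r = (m/2)*(2 * \sum_(z <- z0 :: r) n z - n z0 - n (last z0 r))
   + m * (t (last z0 r) - t z0).
Proof.
elim: r z0 => [|z1 r IH] z0 /=.
  by rewrite big_cons big_nil; ring.
rewrite IH !big_cons /f2; ring.
Qed.

Let le_t := fun p q => t p <= t q.

Lemma exists_pair z0 r : 0 < m -> (forall z, 0 <= n z) -> path le_t z0 r -> uniq (z0 :: r) ->
  (0 < size r)%N -> ps z0 r <= 3 * (size r)%:R ->
  exists p q, [/\ p \in z0 :: r, q \in z0 :: r, p != q &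
     (n p + n q) * (t p - t q)^+2 <= 8 / m^+3].
Proof.
move=> hm hn; elim: r z0 => [|z1 r IH] z0 //= /andP[hle hpath] /andP[hz0 hu] _ hps.
have [h|h] := leP (f2 z0 z1) 3.
  exists z0, z1; split.
  - by rewrite inE eqxx.
  - by rewrite !inE eqxx orbT.
  - by apply: contraNneq hz0 => ->; rewrite inE eqxx.
  have -> : (t z0 - t z1)^+2 = (t z1 - t z0)^+2 by rewrite -sqrrN opprB.
  apply: pair_bound => //; first by apply: addr_ge0.
  by rewrite subr_ge0.
have hps' : ps z1 r < 3 * (size r)%:R.
  move: hps; rewrite -addn1 natrD; lra.
case: r IH hpath hu hps' hz0 {hps} => [|z2 r] IH hpath hu hps' hz0.
  by move: hps'; rewrite /= mulr0 ltxx.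
have [p [q [hp hq hpq hb]]] := IH z1 hpath hu isT (ltW hps').
exists p, q; split => //.
- by rewrite inE hp orbT.
- by rewrite inE hq orbT.
Qed.

Lemma pigeon (l : seq T) (k : nat) : m = (k.+1)%:R -> uniq l -> size l = k.+2 ->
  (forall z, 0 <= n z) -> (forall z, -1 <= t z <= 1) -> \sum_(z <- l) n z <= 1 ->
  exists p q, [/\ p \in l, q \in l, p != q &
     (n p + n q) * (t p - t q)^+2 <= 8 / m^+3].
Proof.
move=> em hu hs hn ht hsum.
have hm : 0 < m by rewrite em ltr0n.
have tot : total le_t by move=> p q; rewrite /le_t le_total.
have hperm : perm_eq (sort le_t l) l by rewrite perm_sort.
have hsorted := sort_sorted tot l.
have husort : uniq (sort le_t l) by rewrite (perm_uniq hperm).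
have hsz : size (sort le_t l) = k.+2 by rewrite size_sort.
move: hsorted husort hsz (perm_big _ hperm : \sum_(z <- sort le_t l) n z = _) (perm_mem hperm).
case: (sort le_t l) => [|z0 r] //= hpath hu' [hsz] hsum' hmem.
have [p [q [hp hq hpq hb]]] : exists p q, [/\ p \in z0 :: r, q \in z0 :: r, p != q &
     (n p + n q) * (t p - t q)^+2 <= 8 / m^+3].
  apply: exists_pair => //; first by rewrite hsz.
  rewrite ps_eq hsz -em.
  have := ht z0; have := ht (last z0 r); have := hn z0; have := hn (last z0 r).
  rewrite hsum'; move=> *.
  have : (m/2)*(2 * \sum_(z <- l) n z - n z0 - n (last z0 r)) <= (m/2) * 2.
    apply: ler_wpM2l; lra.
  have : m * (t (last z0 r) - t z0) <= m * 2 by apply: ler_wpM2l; lra.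
  lra.
by exists p, q; split => //; rewrite -hmem.
Qed.

End Pigeon.

Section Info.
Variables (R : realType) (X Y : finType) (P : X -> Y -> R).

Definition blk (T : eqType) (g : Y -> T) (z : T) : R :=
  \sum_(x : X) psi (pXg P g x z) (pX P x) (pg P g z).
Arguments blk {T}.

Lemma MI_blk (T : eqType) (g : Y -> T) : MI P g = \sum_(z <- labels g) blk g z.
Proof. by []. Qed.

Lemma labelsP (T : eqType) (g : Y -> T) z : reflect (exists y, z = g y) (z \in labels g).
Proof.
rewrite /labels mem_undup; apply: (iffP mapP).
  by case=> y _ ->; exists y.
by case=> y ->; exists y => //; rewrite mem_enum.
Qed.

Lemma labels_uniq (T : eqType) (g : Y -> T) : uniq (labels g).
Proof. exact: undup_uniq. Qed.

Lemma pXg_out (T : eqType) (g : Y -> T) x z : z \notin labels g -> pXg P g x z = 0.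
Proof.
move=> hz; rewrite /pXg big1 // => y /eqP hy.
by case/negP: hz; apply/labelsP; exists y.
Qed.

Lemma blk_out (T : eqType) (g : Y -> T) z : z \notin labels g -> blk g z = 0.
Proof.
by move=> hz; rewrite /blk big1 // => x _; rewrite pXg_out // psi0.
Qed.

Arguments blk_out {T g z}.
Arguments labels_uniq {T g}.
Lemma MI_sum (g : Y -> nat) (U : seq nat) : uniq U -> {subset labels g <= U} ->
  MI P g = \sum_(z <- U) blk g z.
Proof.
move=> hU hsub.
rewrite (bigID (fun z => z \in labels g)) /= [X in _ + X]big1 ?addr0; last first.
  by move=> z hz; apply: blk_out.
rewrite -big_filter MI_blk; apply: perm_big.
apply: uniq_perm; [exact: labels_uniq| exact: filter_uniq |].
by move=> z; rewrite mem_filter; case: (boolP (z \in labels g)) => // /hsub ->.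
Qed.
Arguments MI_sum {g U}.

Section Merge.
Variables (g : Y -> nat) (i j k : nat).
Hypotheses (hi : i \in labels g) (hj : j \in labels g) (hij : i != j) (hk : k \notin labels g).
Let h := Defs.merge g i j k.

Lemma gk y : g y != k.
Proof. by apply: contraNneq hk => <-; apply/labelsP; exists y. Qed.

Lemma merge_sub : {subset labels h <= k :: labels g}.
Proof.
move=> z /labelsP [y ->]; rewrite /h /Defs.merge inE.
case: ifP => _; first by rewrite eqxx.
by apply/orP; right; apply/labelsP; exists y.
Qed.

Lemma pXg_other x z : z != i -> z != j -> z != k -> pXg P h x z = pXg P g x z.
Proof.
move=> zi zj zk; apply: eq_bigl => y; rewrite /h /Defs.merge.
case: ifP => //; case/orP => /eqP ->; first by rewrite eq_sym (negbTE zk) eq_sym (negbTE zi).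
by rewrite eq_sym (negbTE zk) eq_sym (negbTE zj).
Qed.

Lemma blk_other z : z != i -> z != j -> z != k -> blk h z = blk g z.
Proof.
move=> zi zj zk; rewrite /blk /pg.
have e : forall x, pXg P h x z = pXg P g x z by move=> x; apply: pXg_other.
under eq_bigr do rewrite e.
by under eq_bigr do under eq_bigr do rewrite e.
Qed.

Lemma notin_h z : (z == i) || (z == j) -> z \notin labels h.
Proof.
move=> hz; apply/negP => /labelsP [y] ey; move: hz; rewrite ey /h /Defs.merge.
case: ifP => [_ /orP[] /eqP ek|].
- by move: hk; rewrite ek hi.
- by move: hk; rewrite ek hj.
by move=> ->.
Qed.

Lemma pXg_k x : pXg P h x k = pXg P g x i + pXg P g x j.
Proof.
rewrite /pXg !(big_mkcond (fun y => _ == _)) -big_split /=; apply: eq_bigr => y _.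
rewrite /h /Defs.merge.
have [e|gi] := eqVneq (g y) i.
  by rewrite /= eqxx e (negbTE hij) addr0.
have [e|gj] := eqVneq (g y) j.
  by rewrite /= eqxx add0r.
by rewrite /= (negbTE (gk y)) addr0.
Qed.

Lemma pg_k : pg P h k = pg P g i + pg P g j.
Proof. by rewrite /pg -big_split; apply: eq_bigr => x _; rewrite pXg_k. Qed.

Lemma pXg_le x : (forall x y, 0 <= P x y) -> pXg P g x i + pXg P g x j <= pX P x.
Proof.
move=> h0; rewrite /pXg /pX !(big_mkcond (fun y => _ == _)) -big_split /=.
apply: ler_sum => y _.
have [e|gi] := eqVneq (g y) i.
  by rewrite e (negbTE hij) addr0.
by case: eqP => _; rewrite ?add0r ?addr0.
Qed.

Lemma MI_merge : MI P g - MI P h = blk g i + blk g j - blk h k.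
Proof.
have hU : uniq (k :: labels g) by rewrite /= hk labels_uniq.
have hsub : {subset labels g <= k :: labels g} by move=> z hz; rewrite inE hz orbT.
rewrite (MI_sum hU hsub).
rewrite (MI_sum hU merge_sub) -sumrB big_cons (blk_out hk) sub0r.
rewrite (bigD1_seq i) //= ?labels_uniq // -big_filter.
rewrite (bigD1_seq j) /= ?filter_uniq ?labels_uniq //; last first.
  by rewrite mem_filter eq_sym hij hj.
rewrite big1_seq ?addr0; last first.
  move=> z /andP [zj]; rewrite mem_filter => /andP [zi zg].
  rewrite blk_other // ?subrr //.
  by apply: contraNneq hk => <-.
have ni : i \notin labels h by apply: notin_h; rewrite eqxx.
have nj : j \notin labels h by apply: notin_h; rewrite eqxx orbT.
rewrite (blk_out ni) (blk_out nj).
by rewrite !subr0; ring.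
Qed.

End Merge.

Lemma binX : #|X| = 2%N -> exists x0 x1 : X, x0 != x1 /\
  forall F : X -> R, \sum_(x : X) F x = F x0 + F x1.
Proof.
rewrite cardE => hX.
have hu := enum_uniq X.
have hm : forall x : X, x \in enum X by move=> x; rewrite mem_enum.
move: hu hm hX; case: (enum X) => [|x0 [|x1 [|]]] //= hu hm _.
have h01 : x0 != x1 by move: hu; rewrite inE andbT.
exists x0, x1; split => // F.
rewrite (bigD1 x0) //=; congr (_ + _); apply: big_pred1 => x /=.
have := hm x; rewrite !inE; case/orP => /eqP ->; first by rewrite eqxx (negbTE h01).
by rewrite eqxx eq_sym h01.
Qed.

Lemma sum_indic (T : eqType) (s : seq T) (w : T) (c : R) : uniq s -> w \in s ->
  \sum_(z <- s) (if w == z then c else 0) = c.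
Proof.
move=> hu hw; rewrite (bigD1_seq w) //= eqxx big1 ?addr0 // => z hz.
by rewrite eq_sym (negbTE hz).
Qed.

Lemma sum_pXg (T : eqType) (g : Y -> T) x : \sum_(z <- labels g) pXg P g x z = pX P x.
Proof.
rewrite /pXg /pX.
under eq_bigr do rewrite big_mkcond.
rewrite exchange_big /=; apply: eq_bigr => y _.
apply: sum_indic; first exact: labels_uniq.
by apply/labelsP; exists y.
Qed.

Lemma sum_pg (T : eqType) (g : Y -> T) : is_joint_dist P -> \sum_(z <- labels g) pg P g z = 1.
Proof.
case=> _ h1; rewrite /pg exchange_big /=.
by under eq_bigr do rewrite sum_pXg.
Qed.

Lemma pXg_ge0 (T : eqType) (g : Y -> T) x z : is_joint_dist P -> 0 <= pXg P g x z.
Proof. by case=> h0 _; apply: sumr_ge0 => y _. Qed.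

Lemma pg_ge0 (T : eqType) (g : Y -> T) z : is_joint_dist P -> 0 <= pg P g z.
Proof. by move=> hP; apply: sumr_ge0 => x _; apply: pXg_ge0. Qed.

Lemma step_bound (g : Y -> nat) i j k x0 x1 : is_joint_dist P ->
  (forall F : X -> R, \sum_(x : X) F x = F x0 + F x1) ->
  i \in labels g -> j \in labels g -> i != j -> k \notin labels g ->
  MI P g - MI P (Defs.merge g i j k) <= 2 * (pg P g i + pg P g j) *
   (tt (pXg P g x0 i) (pXg P g x1 i) - tt (pXg P g x0 j) (pXg P g x1 j))^+2.
Proof.
move=> hP hs hi hj hij hk.
have hle := pXg_le g i j hij; case: (hP) => h0 _.
rewrite (MI_merge g i j k hi hj hij hk) /blk !hs (pg_k g i j k hij hk) /pg !hs !(pXg_k g i j k hij hk).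
have := @key R (pXg P g x0 i) (pXg P g x1 i) (pXg P g x0 j) (pXg P g x1 j) (pX P x0) (pX P x1)
  (pXg_ge0 _ _ _ _ hP) (pXg_ge0 _ _ _ _ hP) (pXg_ge0 _ _ _ _ hP) (pXg_ge0 _ _ _ _ hP) (hle x0 h0) (hle x1 h0).
lra.
Qed.

Lemma size_merge (g : Y -> nat) i j k : i \in labels g -> j \in labels g -> i != j ->
  k \notin labels g -> (size (labels (Defs.merge g i j k)) < size (labels g))%N.
Proof.
move=> hi hj hij hk.
set p := fun z : nat => (z != i) && (z != j).
have h1 : (size (labels (Defs.merge g i j k)) <= size (k :: filter p (labels g)))%N.
  apply: uniq_leq_size; first exact: labels_uniq.
  move=> z hz; have := merge_sub g i j k _ hz; rewrite !inE.
  case/orP => [->//|zg]; apply/orP; right; rewrite mem_filter zg andbT /p.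
  apply/andP; split; apply: contraTneq hz => ->; apply: (notin_h g i j k hi hj hk); rewrite eqxx ?orbT //.
have h2 : (2 <= size (filter (predC p) (labels g)))%N.
  have -> : 2%N = size [:: i; j] by [].
  apply: uniq_leq_size; first by rewrite /= inE hij.
  move=> z; rewrite !inE mem_filter /p /= => /orP [] /eqP ->.
  - by rewrite eqxx hi.
  - by rewrite eqxx andbF hj.
have h3 := count_predC p (labels g).
move: h1 h2 h3; rewrite /= !size_filter; lia.
Qed.

Lemma greedy_step_bound (g g' : Y -> nat) (m : nat) x0 x1 : is_joint_dist P ->
  (forall F : X -> R, \sum_(x : X) F x = F x0 + F x1) ->
  size (labels g) = m.+2 -> greedy_step P g g' ->
  MI P g - MI P g' <= 16 / (m.+1)%:R^+3 /\ (size (labels g') < size (labels g))%N.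
Proof.
move=> hP hs hsz [i [j [k [[hi hj hij hk] [hmin heq]]]]].
have -> : g' = Defs.merge g i j k by apply: boolp.funext => y; rewrite heq.
split; last exact: size_merge.
set tz := fun z => tt (pXg P g x0 z) (pXg P g x1 z).
set nz := fun z => pg P g z.
have hsum : \sum_(z <- labels g) nz z <= 1 by rewrite /nz sum_pg.
have [p [q [hp hq hpq hb]]] := @pigeon R _ tz nz (m.+1)%:R (labels g) m erefl labels_uniq hsz
  (fun z => pg_ge0 _ _ z hP) (fun z => @tt_bound R _ _ (pXg_ge0 _ _ _ _ hP) (pXg_ge0 _ _ _ _ hP))
  hsum.
have h1 := hmin p q k hp hq hpq hk.
have h2 := step_bound g p q k x0 x1 hP hs hp hq hpq hk.
rewrite /tz /nz /= in hb.
have : MI P g - MI P (Defs.merge g i j k) <= 2 * (8 / (m.+1)%:R ^+ 3).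
  apply: (le_trans h1); apply: (le_trans h2).
  rewrite -mulrA; apply: ler_wpM2l; [lra | exact: hb].
have -> : 16 / (m.+1)%:R ^+ 3 = 2 * (8 / (m.+1)%:R ^+ 3) :> R.
  by rewrite mulrA; congr (_ * _); lra.
by [].
Qed.

Lemma inv_sq_anti (a b : R) : 0 < a -> a <= b -> 32 / b^+2 <= 32 / a^+2.
Proof.
move=> ha hab.
have hb : 0 < b by lra.
rewrite -subr_ge0.
have -> : 32 / a ^+ 2 - 32 / b ^+ 2 = 32 * ((b - a) * (b + a)) / (a^+2 * b^+2).
  by field; apply/andP; split; apply/eqP; lra.
apply: divr_ge0; last by apply: mulr_ge0; apply: sqr_ge0.
apply: mulr_ge0; first lra.
apply: mulr_ge0; lra.
Qed.

Lemma tele (K : R) : 1 <= K -> 16 / K^+3 + 32 / (K+1)^+2 <= 32 / K^+2.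
Proof.
move=> hK; rewrite -subr_ge0.
have -> : 32 / K^+2 - (16 / K^+3 + 32 / (K+1)^+2) = 16 * (3 * K^+2 - 1) / (K^+3 * (K+1)^+2).
  by field; apply/andP; split; apply/eqP; lra.
apply: divr_ge0; first by apply: mulr_ge0; [lra| nra].
apply: mulr_ge0; [apply: exprn_ge0; lra| apply: sqr_ge0].
Qed.

Lemma run_end L : forall s g, greedy_run P L g s -> (size (labels (last g s)) <= L)%N.
Proof. by elim=> [|g' s IH] g //= [_ [_ /IH]]. Qed.

Lemma run_bound (L : nat) x0 x1 : (0 < L)%N -> is_joint_dist P ->
  (forall F : X -> R, \sum_(x : X) F x = F x0 + F x1) ->
  forall s g, greedy_run P L g s ->
  MI P g - MI P (last g s) <= 32 / (L%:R^+2) - 32 / ((maxn (size (labels g)) L)%:R^+2).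
Proof.
move=> hL hP hs; elim=> [|g' s IH] g /=.
  by move=> hle; rewrite (maxn_idPr hle) !subrr.
move=> [hlt [hstep hrun]].
have := IH _ hrun.
case hM : (size (labels g)) => [|[|m]]; first by move: hlt; rewrite hM.
  by rewrite hM in hlt; lia.
have [hd hsz] := greedy_step_bound g g' m x0 x1 hP hs hM hstep.
rewrite hM in hlt hsz.
have e1 : maxn m.+2 L = m.+2 by apply/maxn_idPl; apply: ltnW.
have e2 : (maxn (size (labels g')) L <= m.+1)%N by rewrite geq_max -ltnS hsz.
have hLpos : 0 < (maxn (size (labels g')) L)%:R :> R.
  by rewrite ltr0n; apply: leq_trans hL (leq_maxr _ _).
have hle : (maxn (size (labels g')) L)%:R <= (m.+1)%:R :> R by rewrite ler_nat.
have hmono := inv_sq_anti _ _ hLpos hle.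
have h1K : 1 <= (m.+1)%:R :> R by rewrite ler1n.
have ht := tele _ h1K.
rewrite e1; move=> hIH.
have -> : (m.+2)%:R = (m.+1)%:R + 1 :> R by rewrite -natr1.
move: hd hIH hmono ht.
set a := MI P g; set b := MI P g'; set c := MI P (last g' s).
set d := 32 / L%:R ^+ 2; set e := 32 / _ ^+ 2; set f := 32 / (m.+1)%:R ^+ 2.
set u := 16 / _ ^+ 3; set v := 32 / (_ + 1) ^+ 2.
lra.
Qed.

Lemma undup_relabel (T1 T2 : eqType) (g1 : Y -> T1) (g2 : Y -> T2) (F1 : T1 -> R) (F2 : T2 -> R)
  (s : seq Y) : (forall y y', (g1 y == g1 y') = (g2 y == g2 y')) ->
  (forall y, F1 (g1 y) = F2 (g2 y)) ->
  \sum_(z <- undup (map g1 s)) F1 z = \sum_(z <- undup (map g2 s)) F2 z.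
Proof.
move=> H HF; elim: s => [|y s IH] /=; first by rewrite !big_nil.
have -> : (g1 y \in map g1 s) = (g2 y \in map g2 s).
  apply/mapP/mapP => [[y' hy' e]|[y' hy' e]]; exists y' => //; apply/eqP.
    by rewrite -H; apply/eqP.
  by rewrite H; apply/eqP.
by case: ifP => _ //; rewrite !big_cons IH HF.
Qed.

Lemma MI_relabel (T1 T2 : eqType) (g1 : Y -> T1) (g2 : Y -> T2) :
  (forall y y', (g1 y == g1 y') = (g2 y == g2 y')) -> MI P g1 = MI P g2.
Proof.
move=> H; rewrite !MI_blk /labels; apply: undup_relabel => // y.
have e : forall x, pXg P g1 x (g1 y) = pXg P g2 x (g2 y).
  by move=> x; apply: eq_bigl => y'; rewrite H.
rewrite /blk /pg; apply: eq_bigr => x _; rewrite e.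
by congr psi; apply: eq_bigr => x' _; rewrite e.
Qed.

End Info.

Theorem theorem6 (R : realType) (X Y : finType) (P : X -> Y -> R) (L : nat)
  (hX : #|X| = 2%N) (hP : is_joint_dist P) (hL : (0 < L)%N)
  (g0 : Y -> nat) (hg0 : injective g0) (s : seq (Y -> nat))
  (hrun : greedy_run P L g0 s) :
  exists f : Y -> 'I_L,
    (forall y y', (f y == f y') = (last g0 s y == last g0 s y')) /\
    MI P (fun y : Y => y) - MI P f <= 64 / (L%:R ^+ 2).
Proof.
have [x0 [x1 [_ hs]]] := binX R X hX.
have hb := @run_bound R X Y P L x0 x1 hL hP hs s g0 hrun.
set gL := last g0 s in hb *.
have hend : (size (labels gL) <= L)%N := @run_end R X Y P L s g0 hrun.
have hidx : forall y, (index (gL y) (labels gL) < L)%N.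
  move=> y; apply: leq_trans hend; rewrite index_mem.
  by apply/(labelsP Y nat); exists y.
pose f := fun y => Ordinal (hidx y).
have hf : forall y y', (f y == f y') = (gL y == gL y').
  move=> y y'; rewrite /f -val_eqE /=.
  have my : forall y, gL y \in labels gL by move=> z; apply/(labelsP Y nat); exists z.
  apply/eqP/eqP => [e|->//].
  by rewrite -(nth_index 0 (my y)) e nth_index.
exists f; split => //.
rewrite (@MI_relabel R X Y P _ _ (fun y : Y => y) g0); last by move=> y y'; rewrite inj_eq.
rewrite (@MI_relabel R X Y P _ _ f gL) //.
apply: (le_trans hb).
have h0 : 0 <= 32 / (maxn (size (labels g0)) L)%:R ^+ 2 :> R.
  by apply: divr_ge0; [lra| apply: sqr_ge0].
have h1 : 0 <= 32 / L%:R ^+ 2 :> R.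
  by apply: divr_ge0; [lra| apply: sqr_ge0].
have -> : 64 / L%:R ^+ 2 = 2 * (32 / L%:R ^+ 2) :> R.
  by rewrite mulrA; congr (_ * _); lra.
lra.
Qed.
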